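(* Let $\mathbb{N}_0[[x]]$ be the semidomain of formal power series with coefficients in $\mathbb{N}_0$ (a subsemiring of $\mathbb{Z}[[x]]$). Then $\mathbb{N}_0[[x]]$ is not atomic. (In particular, atomicity does not ascend from the UFS $\mathbb{N}_0$ to its semidomain of formal power series.)
   Context: For a semidomain $S$ (a subset of an integral domain containing $0,1$ and closed under $+$ and $\cdot$), $S^*=S\setminus\{0\}$ is a multiplicative monoid; an atom is a nonunit $a\in S^*$ such that $a=bc$ with $b,c\in S^*$ forces $b$ or $c$ to be a unit; $S$ is atomic if every nonunit of $S^*$ is a finite product of atoms. $S$ is a UFS if every nonunit of $S^*$ factors into atoms uniquely up to order and unit factors. *)

(* Defs.v *)
From mathcomp Require Import all_boot.
Set Implicit Arguments. Unset Strict Implicit. Unset Printing Implicit Defensive.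

Section Factorization.
Variables (T : Type) (mul : T -> T -> T) (one zero : T).

Definition is_unit (u : T) : Prop := exists v, mul u v = one.

Definition is_atom (a : T) : Prop :=
  a <> zero /\ ~ is_unit a /\
  forall b c, b <> zero -> c <> zero -> a = mul b c -> is_unit b \/ is_unit c.

Definition is_atomic : Prop :=
  forall a, a <> zero -> ~ is_unit a ->
    exists s : seq T, s <> [::] /\ (forall i, i < size s -> forall d, is_atom (nth d s i)) /\
                      a = foldr mul one s.
End Factorization.

(* N_0[[x]] : formal power series with coefficients in nat, as coefficient
   sequences nat -> nat (coefficient of x^n is f n). *)
Definition nps := nat -> nat.
Definition nps_zero : nps := fun _ => 0.
Definition nps_one : nps := fun n => if n == 0 then 1 else 0.
Definition nps_mul (f g : nps) : nps :=
  fun n => \sum_(i < n.+1) f i * g (n - i).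

(* Main.v *)
Require Import Defs.
From mathcomp Require Import all_boot all_algebra zify.
From Stdlib Require Import FunctionalExtensionality Classical.
Set Implicit Arguments. Unset Strict Implicit. Unset Printing Implicit Defensive.
Import GRing.Theory.
Local Open Scope ring_scope.

Definition T (N : nat) (f : nps) : {poly nat} := \poly_(i < N) (f i).

Lemma mulT N f g n : (n < N)%N -> nps_mul f g n = (T N f * T N g)`_n.
Proof.
move=> hn; rewrite coefM /nps_mul; apply: eq_bigr => i _.
rewrite /T !coef_poly.
have hi : (i < N)%N by apply: leq_ltn_trans hn; rewrite -ltnS.
have hj : (n - i < N)%N by apply: leq_ltn_trans hn; apply: leq_subr.
by rewrite hi hj.
Qed.

Lemma nps_mulC f g : nps_mul f g = nps_mul g f.
Proof. apply: functional_extensionality => n; by rewrite !(mulT _ _ (ltnSn n)) mulrC. Qed.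

Lemma coefM_eqr (P Q Q' : {poly nat}) n :
  (forall j, (j <= n)%N -> Q`_j = Q'`_j) -> (P * Q)`_n = (P * Q')`_n.
Proof. move=> H; rewrite !coefM; apply: eq_bigr => i _; by rewrite H // leq_subr. Qed.
Lemma coefM_eql (P P' Q : {poly nat}) n :
  (forall j, (j <= n)%N -> P`_j = P'`_j) -> (P * Q)`_n = (P' * Q)`_n.
Proof. move=> H; rewrite !coefM; apply: eq_bigr => i _; by rewrite H // -ltnS. Qed.

Lemma coefT N f g j : (j < N)%N -> (T N (nps_mul f g))`_j = (T N f * T N g)`_j.
Proof. move=> hj; by rewrite /T coef_poly hj -/(T N f) -/(T N g) (mulT _ _ hj). Qed.

Lemma nps_mulA f g h : nps_mul f (nps_mul g h) = nps_mul (nps_mul f g) h.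
Proof.
apply: functional_extensionality => n.
rewrite !(mulT _ _ (ltnSn n)).
rewrite (@coefM_eqr _ _ (T n.+1 g * T n.+1 h)); last by move=> j hj; apply: coefT.
rewrite [RHS](@coefM_eql _ (T n.+1 f * T n.+1 g)); last by move=> j hj; apply: coefT.
by rewrite mulrA.
Qed.
Unset Printing All.
Local Close Scope ring_scope.

Lemma mul_at0 f g : nps_mul f g 0 = f 0 * g 0.
Proof. by rewrite /nps_mul big_ord_recl big_ord0 addn0. Qed.

Lemma nps_mul1 f : nps_mul nps_one f = f.
Proof.
apply: functional_extensionality => n.
rewrite /nps_mul big_ord_recl big1 ?addn0 /nps_one /= ?subn0 ?mul1n //.
Qed.

Lemma nps_mulr1 f : nps_mul f nps_one = f.
Proof. by rewrite nps_mulC nps_mul1. Qed.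

Lemma coef_ge_l f g n : f n * g 0 <= nps_mul f g n.
Proof.
rewrite /nps_mul (bigD1 ord_max) //= subnn; exact: leq_addr.
Qed.

Lemma coef_ge_r f g n : f 0 * g n <= nps_mul f g n.
Proof.
rewrite /nps_mul (bigD1 ord0) //= subn0; exact: leq_addr.
Qed.

Lemma coef_ge2 f g n i j : i <= n -> j <= n -> i != j ->
  f i * g (n - i) + f j * g (n - j) <= nps_mul f g n.
Proof.
move=> hi hj hij.
have hi' : i < n.+1 by []. have hj' : j < n.+1 by [].
rewrite /nps_mul (bigD1 (Ordinal hi')) //= (bigD1 (Ordinal hj')) //=; last first.
  by apply/eqP => -[] E; move: hij; rewrite E eqxx.
by rewrite addnA leq_addr.
Qed.

Lemma coef_pos f g n : 0 < nps_mul f g n -> exists i, i <= n /\ 0 < f i * g (n - i).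
Proof.
move=> H; apply/not_all_not_ex => N.
move: H; rewrite /nps_mul big1 //= => i _.
case: i => i hi /=; apply/eqP; rewrite -leqn0 leqNgt; apply/negP => P.
by apply: (N i); split.
Qed.

Definition isu := is_unit nps_mul nps_one.
Definition isa := is_atom nps_mul nps_one nps_zero.

Lemma nonunit u n : 0 < n -> u n != 0 -> ~ isu u.
Proof.
move=> hn hu [w hw].
have h0 : u 0 * w 0 = 1 by rewrite -mul_at0 hw.
move: h0 => /eqP; rewrite muln_eq1 => /andP[_ /eqP w0].
have := coef_ge_l u w n; rewrite hw w0 muln1 /nps_one.
by rewrite (negbTE (lt0n_neq0 hn)) leqn0 (negbTE hu).
Qed.

Lemma nonzero u n : u n != 0 -> u <> nps_zero.
Proof. by move=> h E; move: h; rewrite E. Qed.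

Lemma not_atom g u v n1 n2 : g = nps_mul u v -> 0 < n1 -> u n1 != 0 -> 0 < n2 -> v n2 != 0 -> ~ isa g.
Proof.
move=> E h1 u1 h2 v2 [_ [_ H]].
case: (H u v (nonzero u1) (nonzero v2) E); [exact: nonunit h1 u1 | exact: nonunit h2 v2].
Qed.

Definition e (k : nat) : nps := fun n => nat_of_bool (k %| n).
Definition blk (k m : nat) : nps := fun i => nat_of_bool ((i < m) && (k %| i)).

Lemma blockM k m v n : 0 < m -> k %| m -> (forall j, ~~ (m %| j) -> v j = 0) ->
  nps_mul (blk k m) v n = (k %| n) * v (n %/ m * m).
Proof.
move=> m0 km hv.
have i0 : n %% m < n.+1 by rewrite ltnS leq_mod.
rewrite /nps_mul (bigD1 (Ordinal i0)) //= big1 ?addn0.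
  rewrite /blk ltn_mod m0 /=.
  have -> : (k %| n %% m) = (k %| n) by rewrite {2}(divn_eq n m) dvdn_addr // dvdn_mull.
  by rewrite {2}(divn_eq n m) addnK.
move=> [i hi] /= hne.
rewrite /blk; case: (boolP ((i < m) && (k %| i))) => //= /andP[im _].
case: (boolP (m %| n - i)) => hd; last by rewrite hv ?muln0.
exfalso; move: hne => /eqP; apply; apply: val_inj => /=.
have hin : i <= n by rewrite -ltnS.
case/dvdnP: hd => c hc.
by rewrite -(subnK hin) hc modnMDl modn_small.
Qed.

Lemma comb (A B : nat -> bool) k m :
 0 < k -> (forall n, B n -> k %| n) ->
 (forall n, k %| n -> exists a b, [/\ A a, B b & a + b = n]) ->
 (forall a b a' b', A a -> B b -> A a' -> B b' -> a + b = a' + b' -> a = a') ->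
 0 < m -> B m -> (forall b, 0 < b < m -> ~~ B b) ->
 (forall b, B b -> m %| b) /\ (forall n, k %| n -> A n = A (n %/ m * m)).
Proof.
move=> k0 hB ex uq m0 Bm mmin.
have km : k %| m by apply: hB.
have small : forall n, n < m -> k %| n -> A n.
  move=> n nm kn; have [a [b [Aa Bb ab]]] := ex n kn.
  case: (posnP b) => b0; first by move: ab Aa; rewrite b0 addn0 => ->.
  have bn : b <= n by rewrite -ab leq_addl.
  by move: (mmin b); rewrite b0 (leq_ltn_trans bn nm) Bb => /(_ isT).
have A0 : A 0 by apply: small.
have B0 : B 0.
  have [a [b [Aa Bb ab]]] := ex 0 (dvdn0 k).
  by move: ab Bb => /eqP; rewrite addn_eq0 => /andP[_ /eqP ->].
have P : forall q, (forall r, r < m -> B (q * m + r) -> r = 0) /\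
                   (forall r, r < m -> k %| r -> A (q * m + r) = A (q * m)).
  elim/ltn_ind => q IH.
  have Bd0 : forall b, B b -> b <= q * m -> exists q2, q2 <= q /\ b = q2 * m.
    move=> b Bb hb; exists (b %/ m).
    have E := divn_eq b m.
    have r2m : b %% m < m by rewrite ltn_mod.
    have q2q : b %/ m <= q.
      by rewrite -(leq_pmul2r m0); apply: leq_trans hb; rewrite {2}E leq_addr.
    case: (ltngtP (b %/ m) q) => hq.
    - have := (IH _ hq).1 _ r2m; rewrite -E => /(_ Bb) r20.
      by split => //; rewrite {1}E r20 addn0.
    - by move: hq; rewrite ltnNge q2q.
    - split => //; move: hb; rewrite {1}E hq; lia.
  have Pi : forall r, r < m -> B (q * m + r) -> r = 0.
    move=> r rm Bb; apply/eqP; rewrite eqn0Ngt; apply/negP => r0.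
    have kr : k %| r by have := hB _ Bb; rewrite dvdn_addr // dvdn_mull.
    case: (posnP q) => q0.
      by move: Bb (mmin r); rewrite q0 mul0n add0n r0 rm => -> /(_ isT).
    have [a' [b' [Aa Bb' ab]]] := ex (q * m) (dvdn_mull _ km).
    have [q2 [q2q hb']] := Bd0 _ Bb' (leq_trans (leq_addl a' b') (eq_leq ab)).
    have Aq : A (m - r) by apply: small; [lia | rewrite dvdn_sub].
    have qmm : m <= q * m by rewrite leq_pmull.
    case: (ltngtP q2 q) => hq; last first.
    - have Bqm : B (q * m) by rewrite -hq -hb'.
      have := uq r (q * m) 0 (q * m + r) (small _ rm kr) Bqm A0 Bb.
      move=> H; move: (H (addnC _ _)); lia.
    - by move: hq; rewrite ltnNge q2q.
    case: (posnP q2) => q20.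
      move: hb'; rewrite q20 mul0n => hb'; move: ab; rewrite hb' addn0 => ab.
      have := uq a' m (m - r) (q * m + r) Aa Bm Aq Bb.
      have e1 : a' + m = m - r + (q * m + r) by lia.
      move=> /(_ e1); lia.
    have hq' : q - q2 < q by lia.
    have := (IH _ hq').2 r rm kr.
    have ea : (q - q2) * m = a' by rewrite mulnBl; lia.
    rewrite ea Aa => Aar.
    have := uq (a' + r) b' 0 (q * m + r) Aar Bb' A0 Bb.
    have e1 : a' + r + b' = 0 + (q * m + r) by lia.
    move=> /(_ e1); lia.
  split; first exact: Pi.
  have Bd1 : forall b r, r < m -> B b -> b <= q * m + r -> exists q2, q2 <= q /\ b = q2 * m.
    move=> b r rm Bb hb; exists (b %/ m).
    have E := divn_eq b m.
    have r2m : b %% m < m by rewrite ltn_mod.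
    have q2q : b %/ m < q.+1.
      by rewrite -(ltn_pmul2r m0) mulSn; move: hb; rewrite {1}E; lia.
    rewrite ltnS in q2q.
    case: (ltngtP (b %/ m) q) => hq.
    - have := (IH _ hq).1 _ r2m; rewrite -E => /(_ Bb) r20.
      by split => //; rewrite {1}E r20 addn0.
    - by move: hq; rewrite ltnNge q2q.
    - have := Pi _ r2m; rewrite -hq -E => /(_ Bb) r20.
      by split => //; rewrite {1}E r20 addn0.
  move=> r rm kr.
  case: (posnP r) => r0; first by rewrite r0 addn0.
  apply/idP/idP.
  - move=> Aqr.
    have [a' [b' [Aa Bb' ab]]] := ex (q * m) (dvdn_mull _ km).
    have [q2 [q2q hb']] := Bd0 _ Bb' (leq_trans (leq_addl a' b') (eq_leq ab)).
    case: (posnP q2) => q20.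
      by move: ab; rewrite hb' q20 mul0n addn0 => <-.
    have q2m : 0 < q2 * m by rewrite muln_gt0 q20.
    have Aar : A (a' + r).
      case: (ltngtP q2 q) => hq.
      - have hq' : q - q2 < q by lia.
        have := (IH _ hq').2 r rm kr.
        have ea : (q - q2) * m = a' by rewrite mulnBl; lia.
        by rewrite ea Aa.
      - by move: hq; rewrite ltnNge q2q.
      - have -> : a' = 0 by move: ab; rewrite hb' hq; lia.
        by rewrite add0n small.
    have := uq (a' + r) b' (q * m + r) 0 Aar Bb' Aqr B0.
    have e1 : a' + r + b' = q * m + r + 0 by lia.
    move=> /(_ e1); lia.
  - move=> Aq.
    have [a [b [Aa Bb ab]]] := ex (q * m + r) (dvdn_add (dvdn_mull _ km) kr).
    have [q2 [q2q hb]] := Bd1 _ _ rm Bb (leq_trans (leq_addl a b) (eq_leq ab)).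
    case: (posnP q2) => q20.
      by move: ab; rewrite hb q20 mul0n addn0 => <-.
    have q2m : 0 < q2 * m by rewrite muln_gt0 q20.
    have hle : q2 * m <= q * m by rewrite leq_mul2r q2q orbT.
    have ea : a = (q - q2) * m + r by rewrite mulnBl; lia.
    have Aq2 : A ((q - q2) * m).
      case: (ltngtP q2 q) => hq.
      - have hq' : q - q2 < q by lia.
        by rewrite -((IH _ hq').2 r rm kr) -ea.
      - by move: hq; rewrite ltnNge q2q.
      - by rewrite hq subnn mul0n.
    have := uq ((q - q2) * m) (q2 * m) (q * m) 0 Aq2 (eq_ind _ B Bb _ hb) Aq B0.
    have e1 : (q - q2) * m + q2 * m = q * m + 0 by rewrite mulnBl; lia.
    move=> /(_ e1); rewrite mulnBl; lia.
split.
  move=> b Bb; have E := divn_eq b m.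
  have := (P (b %/ m)).1 (b %% m); rewrite ltn_mod m0 -E => /(_ isT Bb) r0.
  by rewrite E r0 addn0 dvdn_mull.
move=> n kn; have E := divn_eq n m.
have := (P (n %/ m)).2 (n %% m); rewrite ltn_mod m0 -E => /(_ isT) -> //.
by move: kn; rewrite {1}E dvdn_addr // dvdn_mull.
Qed.

Definition prod (s : seq nps) := foldr nps_mul nps_one s.

Lemma prod0 s : prod s 0 = 1 -> forall x, List.In x s -> x 0 = 1.
Proof.
elim: s => //= y s IH; rewrite mul_at0 => /eqP; rewrite muln_eq1 => /andP[/eqP y0 /eqP s0].
by move=> x [<- // | /(IH s0)].
Qed.

Lemma prod_split l1 x l2 : prod (l1 ++ x :: l2) = nps_mul x (prod (l1 ++ l2)).
Proof.
elim: l1 => //= y l1 IH; rewrite IH.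
by rewrite nps_mulA (nps_mulC y x) -nps_mulA.
Qed.

Lemma prod_small s k : (forall x, List.In x s -> x 0 = 1 /\ forall n, 0 < n <= k -> x n = 0) ->
  forall n, 0 < n <= k -> prod s n = 0.
Proof.
elim: s => [|y s IH] H n hn /=.
  by rewrite /nps_one; case: n hn.
have [y0 yn] := H y (or_introl erefl).
have IH' := IH (fun x hx => H x (or_intror hx)).
rewrite /nps_mul big1 // => [[i hi]] _ /=.
case: (posnP i) => i0.
  by rewrite i0 subn0 IH' ?muln0.
rewrite yn ?mul0n // i0 /=; case/andP: hn => _; apply: leq_trans; by rewrite -ltnS.
Qed.

Lemma nps_cancel u h h' : u 0 = 1 -> nps_mul u h = nps_mul u h' -> h = h'.
Proof.
move=> u0 E; apply: functional_extensionality => n.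
elim/ltn_ind: n => n IH.
have := congr1 (fun f => f n) E; rewrite /nps_mul !big_ord_recl /= !subn0 u0 !mul1n.
have -> : \sum_(i < n) u (bump 0 i) * h (n - bump 0 i) = \sum_(i < n) u (bump 0 i) * h' (n - bump 0 i).
  apply: eq_bigr => [[i hi]] _ /=; rewrite IH //; rewrite /bump /=; lia.
by move/addIn.
Qed.

Lemma le1 x : x <= 1 -> x = (x != 0).
Proof. by case: x => [|[|]]. Qed.

Lemma step g h k : 0 < k -> nps_mul g h = e k -> g k != 0 -> isa g ->
  exists m, 0 < m /\ h = e m.
Proof.
move=> k0 E gk ag.
have ek1 : forall n, e k n <= 1 by move=> n; rewrite /e; case: (k %| n).
have := mul_at0 g h; rewrite E /e dvdn0 /= => /esym/eqP; rewrite muln_eq1 => /andP[/eqP g0 /eqP h0].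
have gle : forall n, g n <= e k n by move=> n; have := coef_ge_l g h n; rewrite h0 muln1 E.
have hle : forall n, h n <= e k n by move=> n; have := coef_ge_r g h n; rewrite g0 mul1n E.
pose A n := g n != 0. pose B n := h n != 0.
have gA : forall n, g n = A n by move=> n; apply: le1; apply: leq_trans (gle n) (ek1 n).
have hB' : forall n, h n = B n by move=> n; apply: le1; apply: leq_trans (hle n) (ek1 n).
have hB : forall n, B n -> k %| n.
  by move=> n; rewrite /B -lt0n => /leq_trans /(_ (hle n)); rewrite /e; case: (k %| n).
have hA : forall n, A n -> k %| n.
  by move=> n; rewrite /A -lt0n => /leq_trans /(_ (gle n)); rewrite /e; case: (k %| n).
have ex : forall n, k %| n -> exists a b, [/\ A a, B b & a + b = n].
  move=> n kn; have : 0 < nps_mul g h n by rewrite E /e kn.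
  case/coef_pos => i [hi]; rewrite muln_gt0 => /andP[gi hi'].
  exists i, (n - i); split; [by rewrite /A -lt0n | by rewrite /B -lt0n | by rewrite subnKC].
have uq : forall a b a' b', A a -> B b -> A a' -> B b' -> a + b = a' + b' -> a = a'.
  move=> a b a' b' Aa Bb Aa' Bb' ab; apply/eqP/negPn/negP => ne.
  have ha' : a' <= a + b by rewrite ab leq_addr.
  have := coef_ge2 g h (leq_addr b a) ha' ne.
  have -> : a + b - a' = b' by rewrite ab addKn.
  rewrite addKn gA hB' gA hB' Aa Bb Aa' Bb' E => /leq_trans /(_ (ek1 _)).
  by [].
have A0 : A 0 by rewrite /A g0.
have B0 : B 0 by rewrite /B h0.
case: (classic (exists b, 0 < b /\ B b)) => [Hb | Hb]; last first.
  have h1 : h = nps_one.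
    apply: functional_extensionality => n; rewrite /nps_one.
    case: (posnP n) => [-> | n0]; first by rewrite h0.
    case: n n0 => [|n] // _ /=; rewrite hB'; apply/eqP; rewrite eqb0.
    apply/negP => Bn; apply: Hb; by exists n.+1.
  have ge : g = e k by rewrite -E h1 nps_mulr1.
  have k2 : 0 < k.*2 by rewrite double_gt0.
  exfalso; apply: (not_atom (u := blk k k.*2) (v := e k.*2) (n1 := k) (n2 := k.*2)) ag => //.
  - apply: functional_extensionality => n; rewrite blockM //.
    + by rewrite ge /e dvdn_mull // muln1.
    + by rewrite -mul2n dvdn_mull.
    + by move=> j /negbTE; rewrite /e => ->.
  - rewrite /blk dvdnn andbT -addnn -{1}[k]addn0 ltn_add2l k0.
  - by rewrite /e /=.
  - by rewrite /e /= dvdnn.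
have exP : exists b, (0 < b) && B b by case: Hb => b [b0 Bb]; exists b; rewrite b0.
case: (ex_minnP exP) => m /andP[m0 Bm] mmin.
have mmin' : forall b, 0 < b < m -> ~~ B b.
  move=> b /andP[b0 bm]; apply/negP => Bb; have := mmin b; rewrite b0 Bb => /(_ isT); lia.
have [Bdiv Astr] := comb k0 hB ex uq m0 Bm mmin'.
have km : k %| m := hB m Bm.
have klm : k < m.
  rewrite ltn_neqAle dvdn_leq // andbT; apply/eqP => km'.
  have Bk : B k by rewrite km'.
  have := uq k 0 0 k gk B0 A0 Bk; rewrite addn0 => /(_ erefl) k00.
  by move: k0; rewrite k00.
pose v n := (m %| n) * g n.
have gv : g = nps_mul (blk k m) v.
  apply: functional_extensionality => n.
  have vz : forall j, ~~ (m %| j) -> v j = 0 by move=> j /negbTE; rewrite /v => ->.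
  have bM := @blockM k m v n m0 km vz.
  apply: (eq_trans _ (esym bM)).
  rewrite /v dvdn_mull // mul1n; case: (boolP (k %| n)) => kn.
    by rewrite mul1n !gA Astr.
  rewrite mul0n; have := gle n; rewrite /e (negbTE kn); lia.
case: (classic (exists n2, 0 < n2 /\ v n2 != 0)) => [[n2 [n20 vn2]] | Hv].
  exfalso; apply: (not_atom gv (n1 := k) k0 _ n20 vn2) ag.
  by rewrite /blk klm dvdnn.
have v1 : v = nps_one.
  apply: functional_extensionality => n; rewrite /nps_one.
  case: n => [|n] /=; first by rewrite /v dvdn0 g0.
  apply/eqP; rewrite -leqn0 leqNgt; apply/negP => vn; apply: Hv; exists n.+1; split => //.
  by rewrite -lt0n.
have gb : g = blk k m by rewrite gv v1 nps_mulr1.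
exists m; split => //.
apply: (@nps_cancel (blk k m)); first by rewrite /blk m0 dvdn0.
rewrite -[in LHS]gb E; apply: functional_extensionality => n; rewrite blockM //.
  by rewrite /e dvdn_mull // muln1.
by move=> j /negbTE; rewrite /e => ->.
Qed.

Lemma key N : forall s, size s <= N -> (forall x, List.In x s -> isa x) ->
  forall k, 0 < k -> prod s <> e k.
Proof.
elim: N => [|N IH] s hs ha k k0 E.
  case: s hs ha E => // _ _ /(congr1 (fun f => f k)).
  by rewrite /= /nps_one /e dvdnn (negbTE (lt0n_neq0 k0)).
have P0 : prod s 0 = 1 by rewrite E /e dvdn0.
have c1 := prod0 P0.
have [x [xs xk]] : exists x, List.In x s /\ x k != 0.
  apply: NNPP => H.
  have : prod s k = 0.
    apply: (@prod_small s k) => [x hx|]; last by rewrite k0 leqnn.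
    split; first exact: c1.
    move=> n /andP[n0 nk].
    case: (ltngtP n k) => nk'; last first.
    - rewrite nk'; apply/eqP/negPn/negP => xk; apply: H; by exists x.
    - by move: nk; rewrite leqNgt nk'.
    have [l1 [l2 sE]] := List.in_split _ _ hx.
    have := coef_ge_l x (prod (l1 ++ l2)) n.
    move: P0 E; rewrite sE prod_split => P0 E.
    have : prod (l1 ++ l2) 0 = 1.
      by move: P0; rewrite mul_at0 => /eqP; rewrite muln_eq1 => /andP[_ /eqP].
    move=> ->; rewrite muln1 E /e.
    have -> : (k %| n) = false.
      by apply/negP => /(dvdn_leq n0); rewrite leqNgt nk'.
    by rewrite leqn0 => /eqP.
  by rewrite E /e dvdnn.
have [l1 [l2 sE]] := List.in_split _ _ xs.
move: E; rewrite sE prod_split => E.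
have [m [m0 hm]] := step k0 E xk (ha x xs).
apply: (IH (l1 ++ l2) _ _ m m0 hm).
  by move: hs; rewrite sE !size_cat /= addnS ltnS.
move=> y hy; apply: ha; rewrite sE; apply/List.in_app_iff.
case/List.in_app_iff: hy => hy; [by left | by right; right].
Qed.

Lemma in_nth (x : nps) s : List.In x s -> exists i, i < size s /\ nth x s i = x.
Proof.
elim: s => //= y s IH [-> | /IH [i [hi hn]]]; first by exists 0.
by exists i.+1.
Qed.

Theorem mainTheorem5 : ~ is_atomic nps_mul nps_one nps_zero.
Proof.
move=> H.
have hz : e 1 <> nps_zero by apply: (@nonzero _ 0); rewrite /e dvd1n.
have hu : ~ isu (e 1) by apply: (@nonunit _ 1) => //; rewrite /e dvd1n.
have [s [_ [ha E]]] := H (e 1) hz hu.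
apply: (@key (size s) s (leqnn _) _ 1 isT (esym E)).
move=> x /in_nth [i [hi hn]]; rewrite -hn; exact: ha.
Qed.
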